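(* Let $P$ be a poset and $\varphi:\Delta^n\to N(P)$ a not-necessarily injective simplicial map. Then there exist an injective simplicial map $\bar\varphi:\Delta^k\to N(P)$ and a topological space $K$ such that $\|\Delta^\varphi\|_P$ is a retract (in $\mathrm{Top}_P$) of $\|\Delta^{\bar\varphi}\|_P\otimes K$.
   Context: $\mathrm{Top}_P$: $\Delta$-generated spaces $X$ with continuous $\varphi_X:X\to P$ ($P$ with the Alexandrov topology), maps commuting over $P$. $\varphi_P:\|N(P)\|\to P$ sends a point $(\{p_0<\dots<p_m\},t)$, $t$ in the interior of $\Delta^m$, to $p_m$. For a simplicial map $\psi:\Delta^m\to N(P)$, $\|\Delta^\psi\|_P=(\|\Delta^m\|,\varphi_P\circ\|\psi\|)$. For a space $K$, $(X,\varphi_X)\otimes K=(X\times K,\varphi_X\circ pr_X)$. *)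

(* Defs.v *)
From HB Require Import structures.
From mathcomp Require Import all_boot all_order all_algebra.
From mathcomp Require Import all_classical all_reals all_analysis.
Set Implicit Arguments. Unset Strict Implicit. Unset Printing Implicit Defensive.
Import Order.TTheory GRing.Theory Num.Theory.
Import numFieldNormedType.Exports.
Local Open Scope classical_set_scope.
Local Open Scope ring_scope.

Definition simplex (R : realType) (n : nat) : set 'rV[R]_n.+1 :=
  [set t | (forall i, 0 <= t ord0 i) /\ \sum_(i < n.+1) t ord0 i = 1].
Arguments simplex R n : clear implicits.

(* A simplicial map Delta^n -> N(P) is a monotone map [n] -> P;
   it is injective iff the map on vertices is injective. *)
Definition simplicial_map (d : Order.disp_t) (P : porderType d) (n : nat)
  (phi : 'I_n.+1 -> P) : Prop := {homo phi : i j / (i <= j)%O}.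

Definition last_vertex (R : realType) (n : nat) (t : 'rV[R]_n.+1) : 'I_n.+1 :=
  inord (\max_(i < n.+1 | t ord0 i != 0%R) (i : nat))%N.

(* The stratification of ||Delta^phi||_P = (|Delta^n|, phi_P o ||phi||):
   a point t in the interior of the face spanned by the vertices
   {i | t_i <> 0} is sent by ||phi|| into the interior of the simplex
   {phi(i) | t_i <> 0} of N(P), and phi_P sends it to the largest vertex,
   i.e. phi (last_vertex t) since phi is monotone. *)
Definition strat (R : realType) (d : Order.disp_t) (P : porderType d) (n : nat)
  (phi : 'I_n.+1 -> P) (t : 'rV[R]_n.+1) : P := phi (last_vertex t).

Definition singular_simplex (R : realType) (X : topologicalType) (m : nat)
  (sigma : 'rV[R]_m.+1 -> X) : Prop :=
  {within simplex R m, continuous sigma}.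

Definition Delta_generated (R : realType) (X : topologicalType) : Prop :=
  forall U : set X,
    (forall (m : nat) (sigma : 'rV[R]_m.+1 -> X),
        singular_simplex sigma ->
        exists V : set 'rV[R]_m.+1, open V /\
          sigma @^-1` U `&` simplex R m = V `&` simplex R m) ->
    open U.

(* This is continuity of maps out of the
   product X x K taken in the category of Delta-generated spaces. *)
Definition Delta_continuous (R : realType) (X Y : topologicalType)
  (A : set X) (f : X -> Y) : Prop :=
  forall (m : nat) (sigma : 'rV[R]_m.+1 -> X),
    singular_simplex sigma -> sigma @` simplex R m `<=` A ->
    {within simplex R m, continuous (f \o sigma)}.

(* Main.v *)
Require Import Defs.
From HB Require Import structures.
From mathcomp Require Import all_boot all_order all_algebra.
From mathcomp Require Import all_classical all_reals all_analysis.
Set Implicit Arguments. Unset Strict Implicit. Unset Printing Implicit Defensive.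
Import Order.TTheory GRing.Theory Num.Theory.
Import numFieldNormedType.Exports.
Local Open Scope classical_set_scope.
Local Open Scope ring_scope.
From mathcomp Require Import lra.
Section S.
Variable R : realType.
Lemma row_cont (T : topologicalType) p (f : T -> 'rV[R]_p) :
  (forall j, continuous (fun x => f x ord0 j)) -> continuous f.
Proof.
move=> fc x; apply/cvg_ballP => e e0.
have H : forall i j, \forall y \near x, ball (f x i j) e (f y i j).
  move=> i j; rewrite (ord1 i).
  have := fc j x; move/cvg_ballP => /(_ e e0); exact.
have H2 : forall i, \forall y \near x, forall j, ball (f x i j) e (f y i j).
  by move=> i; apply: filter_forall => j; exact: H.
have H3 := filter_forall _ H2. near=> y.
split => //; near: y; exact: H3.
Unshelve. all: by end_near. Qed.
End S.
Lemma sum_cont (R : realType) (T : topologicalType) (I : finType) (Pr : pred I)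
  (F : I -> T -> R) : (forall i, continuous (F i)) ->
  continuous (fun x => \sum_(i | Pr i) F i x).
Proof.
move=> Fc; exact: (@continuous_big R I +%R 0 Pr add_continuous T (index_enum I) F (fun i _ => Fc i)).
Qed.
Lemma fst_coord (R : realType) p q (i : 'I_p) :
  continuous (fun x : 'rV[R]_p * 'rV[R]_q => x.1 ord0 i).
Proof.
move=> x; apply: (@continuous_comp _ _ _ fst (fun M : 'rV[R]_p => M ord0 i)).
  exact: cvg_fst.
exact: coord_continuous.
Qed.
Lemma snd_coord (R : realType) p q (i : 'I_q) :
  continuous (fun x : 'rV[R]_p * 'rV[R]_q => x.2 ord0 i).
Proof.
move=> x; apply: (@continuous_comp _ _ _ snd (fun M : 'rV[R]_q => M ord0 i)).
  exact: cvg_snd.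
exact: coord_continuous.
Qed.
Lemma min_cont (R : realType) (T : topologicalType) (f g : T -> R) :
  continuous f -> continuous g -> continuous (fun x => Num.min (f x) (g x)).
Proof. move=> fc gc x; exact: (@continuous_min R T f g x (fc x) (gc x)). Qed.
Lemma max_cont (R : realType) (T : topologicalType) (f g : T -> R) :
  continuous f -> continuous g -> continuous (fun x => Num.max (f x) (g x)).
Proof. move=> fc gc x; exact: (@continuous_max R T f g x (fc x) (gc x)). Qed.
Lemma rV_Dgen (R : realType) p : Delta_generated R ('rV[R]_p.+1).
Proof.
move=> U hU; rewrite openE => x Ux.
set c : R := (p.+2%:R)^-1.
have c0 : 0 < c by rewrite invr_gt0 ltr0n.
have cE : c * p.+2%:R = 1 by rewrite mulVf // pnatr_eq0.
pose sigma (t : 'rV[R]_p.+2) : 'rV[R]_p.+1 :=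
  \row_i (x ord0 i + t ord0 (widen_ord (leqnSn p.+1) i) - c).
have sc : singular_simplex sigma.
  apply: continuous_subspaceT; apply: row_cont => j.
  have -> : (fun t => sigma t ord0 j) =
      (fun t => x ord0 j + t ord0 (widen_ord (leqnSn p.+1) j) - c).
    by apply/funext => t; rewrite mxE.
  move=> t; exact: (cvgB (cvgD (cvg_cst _) (@coord_continuous R 1 p.+2 ord0 (widen_ord (leqnSn p.+1) j) t)) (cvg_cst _)).
have [V [oV eV]] := hU p.+1 sigma sc.
pose t0 : 'rV[R]_p.+2 := const_mx c.
have t0S : simplex R p.+1 t0.
  split; first by move=> i; rewrite mxE ltW.
  rewrite (eq_bigr (fun _ => c)); last by move=> i _; rewrite mxE.
  by rewrite sumr_const card_ord -mulr_natr cE.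
have st0 : sigma t0 = x by apply/rowP => i; rewrite !mxE addrK.
have Vt0 : V t0.
  have : (sigma @^-1` U `&` simplex R p.+1) t0 by split => //; rewrite /preimage /= st0.
  by rewrite eV => -[].
have := oV _ Vt0; rewrite /interior => /nbhs_ballP [del del0 hdel].
apply/nbhs_ballP.
set m := Num.min del c.
have m0 : 0 < m by rewrite lt_min del0 c0.
have mdel : m <= del by rewrite ge_min lexx.
have mc : m <= c by rewrite ge_min lexx orbT.
pose e := m / p.+2%:R.
have e0 : 0 < e by rewrite divr_gt0 // ltr0n.
have eE : e * p.+2%:R = m by rewrite /e -mulrA mulVf ?mulr1 // pnatr_eq0.
exists e => // y /= bxy.
pose dl (i : 'I_p.+1) := y ord0 i - x ord0 i.
have hd : forall i, `|dl i| < e.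
  move=> i; move: bxy; rewrite /ball /= => -[_ /(_ ord0 i)].
  by rewrite -ball_normE /= distrC.
set S := \sum_i dl i.
have hS : `|S| <= e * p.+1%:R.
  apply: le_trans (ler_norm_sum _ _ _) _.
  have -> : e * p.+1%:R = \sum_(i < p.+1) e by rewrite sumr_const card_ord mulr_natr.
  by apply: ler_sum => i _; apply: ltW.
have ep : e * p.+1%:R + e = m by rewrite -eE -[in RHS]natr1 mulrDr mulr1.
have ep0 : 0 <= e * p.+1%:R by rewrite mulr_ge0 // ltW.
pose ty : 'rV[R]_p.+2 := \row_(l < p.+2)
  (if (l < p.+1)%N then c + dl (inord l) else c - S).
have sty : sigma ty = y.
  apply/rowP => i; rewrite !mxE /= ltn_ord inord_val /dl.
  lra.
have tyS : simplex R p.+1 ty.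
  split.
    move=> l; rewrite mxE; case: ifP => _.
      have := hd (inord l); rewrite ltr_norml; lra.
    move: hS; rewrite ler_norml; lra.
  rewrite big_ord_recr /= mxE /= ltnn.
  rewrite (eq_bigr (fun i : 'I_p.+1 => c + dl i)); last first.
    by move=> i _; rewrite mxE /= ltn_ord inord_val.
  rewrite big_split /= sumr_const card_ord -/S.
  have cs : c *+ p.+1 + c = 1 by rewrite -mulrSr -mulr_natr cE.
  lra.
have Vty : V ty.
  apply: hdel; rewrite /ball /=; split => // i l; rewrite (ord1 i).
  rewrite -ball_normE /= !mxE; case: ifP => _.
    have := hd (inord l); rewrite ltr_norml => hh.
    rewrite ltr_norml; lra.
  move: hS; rewrite ler_norml => hh; rewrite ltr_norml; lra.
have : (sigma @^-1` U `&` simplex R p.+1) ty by rewrite eV.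
by rewrite /preimage /= sty => -[].
Qed.

Lemma lastv_spec (R : realType) p (w : 'rV[R]_p.+1) :
  (exists i, w ord0 i != 0) ->
  w ord0 (last_vertex w) != 0 /\ forall b, w ord0 b != 0 -> (b <= last_vertex w)%N.
Proof.
move=> [i0 wi0].
have c : (0 < #|[pred i | w ord0 i != 0%R]|)%N.
  by apply/card_gt0P; exists i0.
have [m mA mE] := eq_bigmax_cond (fun i : 'I_p.+1 => (i : nat)) c.
have lvE : last_vertex w = m.
  by apply: val_inj; rewrite /last_vertex /= mE inordK // ltn_ord.
rewrite lvE; split; first by move: mA; rewrite inE.
by move=> b wb; rewrite -mE; exact: (leq_bigmax_cond (F := fun i : 'I_p.+1 => (i:nat)) b wb).
Qed.

Lemma lastv_eq (R : realType) p (w : 'rV[R]_p.+1) (a : 'I_p.+1) :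
  w ord0 a != 0 -> (forall b, w ord0 b != 0 -> (b <= a)%N) -> last_vertex w = a.
Proof.
move=> wa H; have [h1 h2] := lastv_spec (ex_intro _ a wa).
by apply: val_inj; apply/eqP; rewrite eqn_leq (H _ h1) (h2 _ wa).
Qed.

Lemma simplex_nz (R : realType) p (w : 'rV[R]_p.+1) : simplex R p w -> exists i, w ord0 i != 0.
Proof.
move=> [_ h]; apply: contrapT => H.
have : \sum_(i < p.+1) w ord0 i = 0.
  apply: big1 => i _; apply/eqP; apply: contrapT => Hi; apply: H; by exists i; apply/negP.
by rewrite h => /eqP; rewrite oner_eq0.
Qed.
Section Comb.
Variables (d : Order.disp_t) (P : porderType d) (n : nat) (phi : 'I_n.+1 -> P).
Hypothesis hphi : simplicial_map phi.

Definition L := undup (map phi (enum 'I_n.+1)).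
Definition k := (size L).-1.
Lemma phi_in a : phi a \in L.
Proof. by rewrite mem_undup; apply: map_f; rewrite mem_enum. Qed.
Lemma sizeL : size L = k.+1.
Proof. rewrite /k prednK //; have := phi_in ord0; by case: L. Qed.
Lemma index_lt a : (index (phi a) L < k.+1)%N.
Proof. by rewrite -sizeL index_mem phi_in. Qed.
Definition s (a : 'I_n.+1) : 'I_k.+1 := Ordinal (index_lt a).
Definition phibar (j : 'I_k.+1) := nth (phi ord0) L j.
Lemma phibar_s a : phibar (s a) = phi a.
Proof. by rewrite /phibar /= nth_index // phi_in. Qed.
Lemma uniqL : uniq L. Proof. exact: undup_uniq. Qed.
Lemma sortedL : sorted <=%O L.
Proof.
apply: subseq_le_sorted (undup_subseq _) _.
have hm : {homo phi : i j / (i <= j)%O} := hphi.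
apply: (homo_sorted hm).
have : sorted leq (map val (enum 'I_n.+1)) by rewrite val_enum_ord iota_sorted.
rewrite sorted_map; apply: sub_sorted => a b /=; by rewrite leEord.
Qed.
Lemma phibar_inj : injective phibar.
Proof.
move=> i j; rewrite /phibar => /eqP; rewrite nth_uniq ?sizeL //; last exact: uniqL.
by move/eqP/val_inj.
Qed.
Lemma phibar_mono : simplicial_map phibar.
Proof.
move=> i j; rewrite leEord => ij; rewrite /phibar.
by apply: (le_sorted_leq_nth _ sortedL) => //; rewrite inE sizeL.
Qed.
Lemma s_mono (a b : 'I_n.+1) : (a <= b)%N -> (s a <= s b)%N.
Proof.
move=> ab; rewrite leqNgt; apply/negP => ba.
have h1 : (phi a <= phi b)%O by apply: hphi; rewrite leEord.
have h2 : (phi b <= phi a)%O.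
  rewrite -!phibar_s; apply: phibar_mono; rewrite leEord; exact: ltnW.
have : phi a = phi b by apply/eqP; rewrite eq_le h1 h2.
by move=> e; move: ba; rewrite /s /= e ltnn.
Qed.
Lemma s_surj j : exists a, s a = j.
Proof.
have : nth (phi ord0) L j \in L by rewrite mem_nth // sizeL.
rewrite mem_undup => /mapP [a _ ea]; exists a; apply: val_inj => /=.
by rewrite -ea index_uniq ?sizeL // uniqL.
Qed.
Lemma s_max : s ord_max = ord_max.
Proof.
have [a ea] := s_surj ord_max; apply: val_inj; apply/eqP; rewrite /= eqn_leq -ltnS (ltn_ord (s ord_max)) /=.
have -> : k = s a by rewrite ea.
apply: s_mono; exact: leq_ord.
Qed.

Lemma sum_sub (R : realType) (I : finType) (A B : pred I) (f : I -> R) :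
  (forall i, 0 <= f i) -> (forall i, A i -> B i) ->
  \sum_(i | A i) f i <= \sum_(i | B i) f i.
Proof.
move=> f0 AB; rewrite [X in X <= _]big_mkcond [X in _ <= X]big_mkcond.
apply: ler_sum => i _; case: ifP => Ai; first by rewrite AB.
by case: ifP.
Qed.

Variable R : realType.
Definition sn (a : nat) : nat := s (inord a).
Lemma snE (a : 'I_n.+1) : sn a = s a. Proof. by rewrite /sn inord_val. Qed.
Lemma sn_mono a b : (a <= b)%N -> (b <= n)%N -> (sn a <= sn b)%N.
Proof.
move=> ab bn; rewrite /sn; apply: s_mono.
have an : (a < n.+1)%N by rewrite ltnS; exact: leq_trans ab bn.
by rewrite !inordK.
Qed.
Lemma sn_lt a : (sn a < k.+1)%N. Proof. exact: ltn_ord. Qed.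

Definition U (u : 'rV[R]_k.+1) (j : nat) : R := \sum_(i < k.+1 | (i < j)%N) u ord0 i.
Definition X (x : 'rV[R]_n.+1) (a : nat) : R :=
  \sum_(b < n.+1 | (b <= a)%N) Num.max (x ord0 b) 0.
Definition lastf (a : nat) : bool := (a == n) || (sn a != sn a.+1).
Definition C u x a := if lastf a then U u (sn a).+1
  else Num.min (U u (sn a).+1) (Num.max (U u (sn a)) (X x a)).
Definition D u x a := if a is a'.+1 then C u x a' else 0.

Section U.
Variable u : 'rV[R]_k.+1.
Hypothesis u0 : forall i, 0 <= u ord0 i.
Lemma U_ge0 j : 0 <= U u j. Proof. by apply: sumr_ge0 => i _. Qed.
Lemma U_mono j j' : (j <= j')%N -> U u j <= U u j'.
Proof. move=> jj; apply: sum_sub => // i ij; exact: leq_trans ij jj. Qed.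
Lemma X_mono x a a' : (a <= a')%N -> X x a <= X x a'.
Proof.
move=> aa; apply: sum_sub => [i|i ia]; first by rewrite le_max lexx orbT.
exact: leq_trans ia aa.
Qed.
Lemma C_ge x a : U u (sn a) <= C u x a.
Proof.
rewrite /C; case: ifP => _; first exact: U_mono.
by rewrite le_min le_max lexx U_mono.
Qed.
Lemma C_le x a : C u x a <= U u (sn a).+1.
Proof. by rewrite /C; case: ifP => _; rewrite ?lexx // ge_min lexx. Qed.
Lemma D_le_C x a : (a <= n)%N -> D u x a <= C u x a.
Proof.
case: a => [|a] an /=; first exact: le_trans (U_ge0 _) (C_ge _ _).
have an' : (a < n)%N by [].
have := sn_mono (leqnSn a) an; rewrite leq_eqVlt => /orP [/eqP e|hlt].
  rewrite /C /lastf e eqxx orbF (ltn_eqF an') /=.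
  case: ifP => _; first by rewrite ge_min lexx.
  rewrite le_min ge_min lexx /=.
  have h1 : Num.min (U u (sn a.+1).+1) (Num.max (U u (sn a.+1)) (X x a)) <= Num.max (U u (sn a.+1)) (X x a) by rewrite ge_min lexx orbT.
  apply: le_trans h1 _.
  rewrite ge_max le_max lexx /= le_max (X_mono _ (leqnSn a)) orbT //.
rewrite /C /lastf (ltn_eqF hlt) orbT.
apply: le_trans (C_ge _ _); exact: U_mono.
Qed.
Lemma telesc x : \sum_(a < n.+1) (C u x a - D u x a) = C u x n.
Proof.
rewrite -(big_mkord xpredT (fun a => C u x a - D u x a)).
rewrite (eq_bigr (fun a => D u x a.+1 - D u x a)) //.
by rewrite telescope_sumr //= subr0.
Qed.
Lemma Cn x : C u x n = \sum_(i < k.+1) u ord0 i.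
Proof.
rewrite /C /lastf eqxx /=.
have -> : sn n = k.
  rewrite /sn; have -> : inord n = ord_max :> 'I_n.+1 by apply: val_inj; rewrite /= inordK.
  by rewrite s_max.
rewrite /U; apply: eq_bigl => i; exact: ltn_ord.
Qed.
End U.

Definition push (t : 'rV[R]_n.+1) : 'rV[R]_k.+1 :=
  \row_(j < k.+1) \sum_(a < n.+1 | s a == j) t ord0 a.
Definition T (t : 'rV[R]_n.+1) (a : nat) : R := \sum_(b < n.+1 | (b <= a)%N) t ord0 b.

Section Retr.
Variable t : 'rV[R]_n.+1.
Hypothesis t0 : forall i, 0 <= t ord0 i.
Lemma U_push j : U (push t) j = \sum_(a < n.+1 | (s a < j)%N) t ord0 a.
Proof.
rewrite (partition_big s (fun i : 'I_k.+1 => (i < j)%N)) //= /U.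
apply: eq_bigr => i ij; rewrite mxE; apply: eq_bigl => a.
case e: (s a == i); rewrite ?andbT ?andbF //; by move/eqP: e ij => <-.
Qed.
Lemma X_T a : X t a = T t a.
Proof. by apply: eq_bigr => b _; rewrite max_l. Qed.
Lemma U_le_T a : (a <= n)%N -> U (push t) (sn a) <= T t a.
Proof.
move=> an; rewrite U_push; apply: sum_sub => // b.
rewrite -snE; apply: contraTT; rewrite -!ltnNge => ab.
apply: sn_mono; [exact: ltnW | by rewrite -ltnS].
Qed.
Lemma T_le_U a : (a <= n)%N -> T t a <= U (push t) (sn a).+1.
Proof.
move=> an; rewrite U_push; apply: sum_sub => // b ba.
by rewrite ltnS -snE; apply: sn_mono.
Qed.
Lemma T_last a : (a <= n)%N -> lastf a -> T t a = U (push t) (sn a).+1.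
Proof.
move=> an la; apply/eqP; rewrite eq_le T_le_U // U_push.
apply: sum_sub => // b; rewrite ltnS -snE => hb.
rewrite leqNgt; apply/negP => ab.
move: la; rewrite /lastf => /orP [/eqP an'|].
  by have hb' : (b <= n)%N := leq_ord b; move: ab; rewrite an' ltnNge hb'.
have h1 := sn_mono (leqnSn a) (leq_trans ab (leq_ord b)).
have h2 : (sn a.+1 <= sn b)%N by apply: sn_mono; rewrite // -ltnS.
rewrite neq_ltn => /orP [h|h].
  by move: (leq_trans h h2); rewrite ltnNge hb.
by move: (leq_ltn_trans h1 h); rewrite ltnn.
Qed.
Lemma C_T a : (a <= n)%N -> C (push t) t a = T t a.
Proof.
move=> an; rewrite /C; case: ifP => la; first by rewrite T_last.
rewrite X_T max_r ?U_le_T // min_r //; exact: T_le_U.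
Qed.
Lemma D_T (a : 'I_n.+1) : D (push t) t a = \sum_(b < n.+1 | (b < a)%N) t ord0 b.
Proof.
case: a => [[|a] ha] /=.
  by rewrite big_pred0 // => b.
by rewrite C_T // -ltnS ltnW.
Qed.
Lemma retr_coord (a : 'I_n.+1) : C (push t) t a - D (push t) t a = t ord0 a.
Proof.
rewrite D_T C_T; last by rewrite -ltnS.
have -> : T t a = t ord0 a + \sum_(b < n.+1 | (b < a)%N) t ord0 b.
  rewrite /T (bigD1 a) ?leqnn //; congr (_ + _); apply: eq_bigl => b.
  by rewrite ltn_neqAle andbC.
by rewrite addrK.
Qed.
End Retr.

Definition rr (p : 'rV[R]_k.+1 * 'rV[R]_n.+1) : 'rV[R]_n.+1 :=
  \row_(a < n.+1) (C p.1 p.2 a - D p.1 p.2 a).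

Lemma push_simplex t : simplex R n t -> simplex R k (push t).
Proof.
move=> [t0 t1]; split.
  by move=> j; rewrite mxE; apply: sumr_ge0 => a _.
rewrite -t1 (partition_big s xpredT) //=; apply: eq_bigr => j _; rewrite mxE.
by apply: eq_bigl => a.
Qed.

Lemma lastv_push t : simplex R n t -> last_vertex (push t) = s (last_vertex t).
Proof.
move=> ht; have [t0 _] := ht; have [h1 h2] := lastv_spec (simplex_nz ht).
set A := last_vertex t in h1 h2 *.
apply: lastv_eq.
  rewrite mxE; apply: lt0r_neq0.
  apply: lt_le_trans (_ : t ord0 A <= _); first by rewrite lt0r h1 t0.
  rewrite (bigD1 A) //= lerDl; by apply: sumr_ge0 => a _.
move=> j hj; rewrite leqNgt; apply/negP => hlt; move: hj.
rewrite mxE big1 ?eqxx // => a /eqP saj.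
apply/eqP; apply: contraT => ta; have aA := h2 a ta.
by have := s_mono aA; rewrite saj leqNgt hlt.
Qed.

Lemma strat_push t : simplex R n t ->
  strat phibar (push t) = strat phi t.
Proof. by move=> ht; rewrite /strat lastv_push // phibar_s. Qed.

Lemma retr t : simplex R n t -> rr (push t, t) = t.
Proof.
move=> [t0 _]; apply/rowP => a; rewrite mxE /=.
by rewrite retr_coord // (ord1 ord0) .
Qed.

Lemma rr_simplex u x : simplex R k u -> simplex R n (rr (u, x)).
Proof.
move=> [u0 u1]; split.
  by move=> a; rewrite mxE /= subr_ge0; apply: D_le_C => //; exact: leq_ord.
rewrite (eq_bigr (fun a : 'I_n.+1 => C u x a - D u x a)); last by move=> a _; rewrite mxE.
by rewrite telesc // Cn.
Qed.

Section StratR.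
Variables (u : 'rV[R]_k.+1) (x : 'rV[R]_n.+1).
Hypothesis hu : simplex R k u.
Let J := last_vertex u.
Let u0 : forall i, 0 <= u ord0 i. Proof. by case: hu. Qed.
Let hJ : u ord0 J != 0 /\ forall b, u ord0 b != 0 -> (b <= J)%N.
Proof. exact: lastv_spec (simplex_nz hu). Qed.

Lemma U_succ (j : 'I_k.+1) : U u j.+1 = u ord0 j + U u j.
Proof.
rewrite /U (bigD1 j) ?leqnn //; congr (_ + _); apply: eq_bigl => b.
by rewrite ltnS ltn_neqAle andbC.
Qed.

Lemma U_one j : (J < j)%N -> U u j = 1.
Proof.
move=> Jj; case: hu => _ <-; rewrite /U big_mkcond /=; apply: eq_bigr => i _.
case: ifP => // ij; apply/esym/eqP; apply: contraT => ui.
have := hJ.2 i ui => iJ; move: ij; by rewrite (leq_ltn_trans iJ Jj).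
Qed.

Lemma C_one a : (J < sn a)%N -> C u x a = 1.
Proof.
move=> h; apply/eqP; rewrite eq_le; apply/andP; split.
  by rewrite -(U_one (leqW h)); apply: C_le.
by rewrite -(U_one h); apply: C_ge.
Qed.

Lemma rr_zero (a : 'I_n.+1) : (J < s a)%N -> rr (u, x) ord0 a = 0.
Proof.
move=> h; rewrite mxE /= C_one ?snE //.
have [b sb] := s_surj J.
case: a h => [[|a'] ha] h /=.
  have := s_mono (leq0n b : ((Ordinal ha : nat) <= b)%N); rewrite sb => h'.
  by move: (leq_ltn_trans h' h); rewrite ltnn.
have h1 : (J <= sn a')%N.
  rewrite leqNgt; apply/negP => h2.
  have ba : (b <= a')%N.
    rewrite leqNgt; apply/negP => ab.
    have := sn_mono ab (leq_ord b); rewrite snE sb => h3.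
    have e : (s (Ordinal ha) : nat) = sn a'.+1 by rewrite -snE.
    by rewrite e in h; move: (leq_ltn_trans h3 h); rewrite ltnn.
  have := sn_mono ba (ltnW ha); rewrite snE sb => h3.
  by move: (leq_ltn_trans h3 h2); rewrite ltnn.
move: h1; rewrite leq_eqVlt => /orP [/eqP e|h1]; last by rewrite C_one ?subrr.
have la : lastf a'.
  apply/orP; right; rewrite -e.
  have -> : sn a'.+1 = (s (Ordinal ha) : nat) by rewrite -snE.
  by rewrite neq_ltn h.
by rewrite /C la -e U_one ?subrr.
Qed.

Lemma rr_nz : exists a : 'I_n.+1, s a = J /\ rr (u, x) ord0 a != 0.
Proof.
have [b sb] := s_surj J.
have Pb : (fun a : 'I_n.+1 => s a == J) b by rewrite /= sb eqxx.
case: (@arg_maxnP _ b (fun a : 'I_n.+1 => s a == J) (fun a : 'I_n.+1 => (a : nat)) Pb) => a1 /eqP sa1 Ha1.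
case: (@arg_minnP _ b (fun a : 'I_n.+1 => s a == J) (fun a : 'I_n.+1 => (a : nat)) Pb) => a0 /eqP sa0 Ha0.
apply: contrapT => H.
have H' : forall a : 'I_n.+1, s a = J -> C u x a - D u x a = 0.
  move=> a sa; apply: contrapT => ne; apply: H; exists a; split => //.
  by rewrite mxE; apply/eqP.
have a01 : (a0 <= a1)%N by apply: Ha1; rewrite /= sa0.
have tel : \sum_(a0 <= a < a1.+1) (C u x a - D u x a) = C u x a1 - D u x a0.
  rewrite (eq_bigr (fun a => D u x a.+1 - D u x a)) // telescope_sumr //.
  exact: leqW.
have z : \sum_(a0 <= a < a1.+1) (C u x a - D u x a) = 0.
  rewrite big_nat; apply: big1 => a /andP [h0 h1].
  have an : (a < n.+1)%N by apply: leq_trans h1 _; exact: ltn_ord.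
  have sa : s (Ordinal an) = J.
    apply: val_inj; apply/eqP; rewrite eqn_leq.
    have := s_mono (_ : ((Ordinal an : nat) <= a1)%N) => /(_ h1); rewrite sa1 => ->.
    by have := s_mono (_ : (a0 <= (Ordinal an : nat))%N) => /(_ h0); rewrite sa0 => ->.
  exact: (H' _ sa).
have Ca1 : C u x a1 = U u J.+1.
  have la : lastf a1.
    rewrite /lastf; case: eqP => //= /eqP ne.
    have a2n : (a1.+1 < n.+1)%N by rewrite ltnS ltn_neqAle ne /= -ltnS.
    apply/negP => /eqP e.
    have : (fun a : 'I_n.+1 => s a == J) (Ordinal a2n).
      have : (s (Ordinal a2n) : nat) = s a1 by rewrite -!snE /= e.
      by move/val_inj => ->; rewrite /= sa1.
    by move/Ha1; rewrite /= ltnn.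
  by rewrite /C la snE sa1.
have Dgen : forall a0' : 'I_n.+1, s a0' = J ->
    (forall j : 'I_n.+1, s j == J -> (a0' <= j)%N) -> D u x a0' <= U u J.
  move=> [[|a'] ha] sa0' Ha0' /=; first exact: U_ge0.
  have a'n : (a' < n.+1)%N := ltnW ha.
  have e1 : sn a'.+1 = J by have := snE (Ordinal ha); rewrite sa0'; exact.
  have h1 : (sn a' < J)%N.
    rewrite ltn_neqAle -{2}e1 sn_mono // -?ltnS // andbT.
    apply/negP => /eqP e.
    have : (fun a : 'I_n.+1 => s a == J) (Ordinal a'n).
      have h := snE (Ordinal a'n); change (sn a' = s (Ordinal a'n)) in h.
      by apply/eqP; apply: ord_inj; rewrite -h e.
    by move/Ha0'; rewrite /= ltnn.
  have la : lastf a' by rewrite /lastf e1 neq_ltn h1 orbT.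
  rewrite /C la; exact: U_mono.
have Da0 := Dgen a0 sa0 Ha0.
have : U u J.+1 - U u J <= 0.
  rewrite -z tel Ca1 lerB //.
move: (hJ.1); rewrite U_succ addrK => nz.
by rewrite le_eqVlt (negbTE nz) /= ltNge u0.
Qed.

Lemma lastv_rr : s (last_vertex (rr (u, x))) = J.
Proof.
have [h1 h2] := lastv_spec (simplex_nz (rr_simplex x hu)).
set A := last_vertex _ in h1 h2 *.
have [a [sa ra]] := rr_nz.
apply: val_inj; apply/eqP; rewrite eqn_leq; apply/andP; split.
  by rewrite leqNgt; apply/negP => h; move: h1; rewrite rr_zero ?eqxx.
by rewrite -sa; apply: s_mono; exact: h2.
Qed.

Lemma strat_rr : strat phi (rr (u, x)) = strat phibar u.
Proof. by rewrite /strat -phibar_s lastv_rr. Qed.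
End StratR.
Lemma U_cont j : continuous (fun p : 'rV[R]_k.+1 * 'rV[R]_n.+1 => U p.1 j).
Proof. apply: sum_cont => i; exact: fst_coord. Qed.
Lemma X_cont a : continuous (fun p : 'rV[R]_k.+1 * 'rV[R]_n.+1 => X p.2 a).
Proof.
apply: sum_cont => b; apply: max_cont; first exact: snd_coord.
by move=> z; exact: cvg_cst.
Qed.
Lemma C_cont a : continuous (fun p : 'rV[R]_k.+1 * 'rV[R]_n.+1 => C p.1 p.2 a).
Proof.
rewrite /C; case: (lastf a); first exact: U_cont.
apply: min_cont; first exact: U_cont.
apply: max_cont; [exact: U_cont | exact: X_cont].
Qed.
Lemma D_cont a : continuous (fun p : 'rV[R]_k.+1 * 'rV[R]_n.+1 => D p.1 p.2 a).
Proof. case: a => [|a] /=; [by move=> z; exact: cvg_cst | exact: C_cont]. Qed.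
Lemma rr_cont : continuous rr.
Proof.
apply: row_cont => j.
have -> : (fun p => rr p ord0 j) = (fun p => C p.1 p.2 j - D p.1 p.2 j).
  by apply/funext => p; rewrite mxE.
move=> z.
have h1 : {for z, continuous (fun p : 'rV[R]_k.+1 * 'rV[R]_n.+1 => C p.1 p.2 j)} by apply: C_cont.
have h2 : {for z, continuous (fun p : 'rV[R]_k.+1 * 'rV[R]_n.+1 => D p.1 p.2 j)} by apply: D_cont.
exact: (cvgB h1 h2).
Qed.
Lemma push_cont : continuous push.
Proof.
apply: row_cont => j.
have -> : (fun t => push t ord0 j) = (fun t => \sum_(a < n.+1 | s a == j) t ord0 a).
  by apply/funext => t; rewrite mxE.
apply: sum_cont => a; exact: coord_continuous.
Qed.
End Comb.

Unset Implicit Arguments.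
Theorem lemma3p3 (R : realType) (d : Order.disp_t) (P : porderType d)
  (n : nat) (phi : 'I_n.+1 -> P) :
  simplicial_map phi ->
  exists (k : nat) (phibar : 'I_k.+1 -> P) (K : topologicalType)
         (i : 'rV[R]_n.+1 -> 'rV[R]_k.+1 * K)
         (r : 'rV[R]_k.+1 * K -> 'rV[R]_n.+1),
    [/\ simplicial_map phibar /\ injective phibar,
        Delta_generated R K,
        (* i : ||Delta^phi||_P -> ||Delta^phibar||_P (x) K, a map in Top_P *)
        [/\ i @` simplex R n `<=` simplex R k `*` setT,
          {within simplex R n, continuous i} &
          (forall t, simplex R n t -> strat phibar (i t).1 = strat phi t)],
        (* r : ||Delta^phibar||_P (x) K -> ||Delta^phi||_P, a map in Top_P *)
        [/\ r @` (simplex R k `*` setT) `<=` simplex R n,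
          Delta_continuous R (simplex R k `*` setT) r &
          (forall x, (simplex R k `*` setT) x -> strat phi (r x) = strat phibar x.1)]
      & (* retraction: r o i = id *)
        forall t, simplex R n t -> r (i t) = t].

Proof.
move=> hphi.
exists (@k d P n phi), (@phibar d P n phi), ('rV[R]_n.+1 : topologicalType), (fun t => (@push d P n phi R t, t)), (@rr d P n phi R).
split.
- split; [exact: phibar_mono | exact: phibar_inj].
- exact: rV_Dgen.
- split.
  + by move=> _ [t ht <-]; split => //; exact: push_simplex.
  + apply: continuous_subspaceT => t.
    have h1 : {for t, continuous (@push d P n phi R)} by apply: push_cont.
    exact: (cvg_pair h1 cvg_id).
  + by move=> t ht; exact: strat_push.
- split.
  + by move=> _ [[u x] [hu _] <-]; exact: rr_simplex.
  + move=> m sigma sc _ t.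
    apply: (@continuous_comp (subspace (simplex R m)) _ _ (from_subspace (simplex R m) sigma) (@rr d P n phi R) t).
      exact: sc.
    by apply: rr_cont.
  + by move=> [u x] [hu _]; exact: strat_rr.
- by move=> t ht; exact: retr.
Qed.
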